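(* Let $A$ be a T-brace whose additive group is torsion-free. If $A$ is Smoktunowicz-nilpotent, then $A$ is abelian (i.e. $a\star b=0$ for all $a,b\in A$).
   Context: A (left) brace is a set $A$ with two operations $+$ and $\cdot$ such that $(A,+)$ is an abelian group, $(A,\cdot)$ is a group, and $a(b+c)=ab+ac-a$ for all $a,b,c\in A$. Put $a\star b=ab-a-b$. For subsets $K,L$, $K\star L$ denotes the subgroup of $(A,+)$ generated by all $x\star y$ with $x\in K,y\in L$. A subbrace is a subset which is a subgroup of both $(A,+)$ and $(A,\cdot)$; a subbrace $L$ is an ideal if $a\star z, z\star a\in L$ for all $a\in A$, $z\in L$. $A$ is a T-brace if whenever $I$ is an ideal of $J$ and $J$ is an ideal of $A$, then $I$ is an ideal of $A$. Define $A^{(1)}=A$, $A^{(n+1)}=A^{(n)}\star A$ and $A^1=A$, $A^{n+1}=A\star A^n$. $A$ is Smoktunowicz-nilpotent if $A^{(n)}=0$ and $A^k=0$ for some natural numbers $n,k$. *)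

(* Defs.v *)
From mathcomp Require Import all_boot all_algebra.
Set Implicit Arguments. Unset Strict Implicit. Unset Printing Implicit Defensive.
Import GRing.Theory.
Local Open Scope ring_scope.

Section Brace.
Variable T : zmodType.
Variables (mul : T -> T -> T) (one : T) (inv : T -> T).

Definition is_brace : Prop :=
  [/\ (forall a b c, mul a (mul b c) = mul (mul a b) c),
      (forall a, mul one a = a /\ mul a one = a),
      (forall a, mul (inv a) a = one /\ mul a (inv a) = one)
    & (forall a b c, mul a (b + c) = mul a b + mul a c - a)].

Definition star (a b : T) : T := mul a b - a - b.

Definition add_subgroup (H : T -> Prop) : Prop :=
  H 0 /\ (forall x y, H x -> H y -> H (x - y)).

Definition add_gen (S : T -> Prop) : T -> Prop :=
  fun x => forall H, add_subgroup H -> (forall y, S y -> H y) -> H x.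

Definition star_set (K L : T -> Prop) : T -> Prop :=
  add_gen (fun z => exists x y, [/\ K x, L y & z = star x y]).

Definition subbrace (L : T -> Prop) : Prop :=
  [/\ add_subgroup L, L one,
      (forall x y, L x -> L y -> L (mul x y))
    & (forall x, L x -> L (inv x))].

Definition ideal_of (J I : T -> Prop) : Prop :=
  [/\ subbrace I, (forall x, I x -> J x)
    & (forall a z, J a -> I z -> I (star a z) /\ I (star z a))].

Definition fullset : T -> Prop := fun _ => True.

Definition ideal (L : T -> Prop) : Prop := ideal_of fullset L.

Definition T_brace : Prop :=
  forall I J, ideal J -> ideal_of J I -> ideal I.

(* rser n = A^(n+1):  A^(1) = A, A^(n+1) = A^(n) * A *)
Fixpoint rser (n : nat) : T -> Prop :=
  match n with
  | 0 => fullset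
  | n'.+1 => star_set (rser n') fullset
  end.

(* lser n = A^{n+1}:  A^1 = A, A^{n+1} = A * A^n *)
Fixpoint lser (n : nat) : T -> Prop :=
  match n with
  | 0 => fullset
  | n'.+1 => star_set fullset (lser n')
  end.

Definition is_zero_set (S : T -> Prop) : Prop := forall x, S x -> x = 0.

Definition smok_nilpotent : Prop :=
  (exists n, is_zero_set (rser n)) /\ (exists k, is_zero_set (lser k)).

Definition torsion_free : Prop := forall (n : nat) (a : T), a *+ n.+1 = 0 -> a = 0.

Definition brace_abelian : Prop := forall a b, star a b = 0.

End Brace.

(* Main.v *)
Require Import Defs.
From mathcomp Require Import all_boot all_algebra.
From mathcomp Require Import zify.
Set Implicit Arguments. Unset Strict Implicit. Unset Printing Implicit Defensive.
Import GRing.Theory.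
Local Open Scope ring_scope.

Section Pf.
Variable T : zmodType.
Variables (mul : T -> T -> T) (one : T) (inv : T -> T).
Hypothesis HB : is_brace mul one inv.
Local Notation star := (star mul).

Lemma mulA a b c : mul a (mul b c) = mul (mul a b) c.
Proof. by case: HB. Qed.
Lemma mul1l a : mul one a = a.
Proof. by case: HB => _ h _ _; case: (h a). Qed.
Lemma mul1r a : mul a one = a.
Proof. by case: HB => _ h _ _; case: (h a). Qed.
Lemma mulVl a : mul (inv a) a = one.
Proof. by case: HB => _ _ h _; case: (h a). Qed.
Lemma mulVr a : mul a (inv a) = one.
Proof. by case: HB => _ _ h _; case: (h a). Qed.
Lemma mulD a b c : mul a (b + c) = mul a b + mul a c - a.
Proof. by case: HB. Qed.

Lemma one0 : one = 0.
Proof.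
have := mulD one 0 0; rewrite !mul1l addr0 add0r => h.
by rewrite -[LHS]opprK -h oppr0.
Qed.

Lemma mul0l a : mul 0 a = a. Proof. by rewrite -one0 mul1l. Qed.
Lemma mul0r a : mul a 0 = a. Proof. by rewrite -one0 mul1r. Qed.

Lemma mulE x y : mul x y = x + y + star x y.
Proof. by rewrite /Defs.star -[mul x y - x - y]addrA -opprD addrC addNKr. Qed.

Lemma star0l x : star 0 x = 0.
Proof. by rewrite /Defs.star mul0l subr0 subrr. Qed.
Lemma star0r x : star x 0 = 0.
Proof. by rewrite /Defs.star mul0r subr0 subrr. Qed.

Lemma starD a x y : star a (x + y) = star a x + star a y.
Proof.
rewrite /Defs.star mulD opprD.
rewrite -!addrA; congr (_ + _).
rewrite addrCA; congr (_ + _).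
rewrite [RHS]addrCA; congr (_ + _).
by rewrite [RHS]addrCA.
Qed.

Lemma starN a x : star a (- x) = - star a x.
Proof.
apply/eqP; rewrite -subr_eq0 opprK -starD addNr star0r //.
Qed.

Lemma starB a x y : star a (x - y) = star a x - star a y.
Proof. by rewrite starD starN. Qed.

Lemma starMn a x n : star a (x *+ n) = star a x *+ n.
Proof.
elim: n => [|n IH]; first by rewrite !mulr0n star0r.
by rewrite !mulrS starD IH.
Qed.

Lemma starMz a x k : star a (x *~ k) = star a x *~ k.
Proof.
case: k => n; first by rewrite /= starMn.
by rewrite !NegzE !mulrNz starN starMn.
Qed.

Definition lam a x := mul a x - a.

Lemma starE a x : star a x = lam a x - x.
Proof. by []. Qed.

Lemma lamD a x y : lam a (x + y) = lam a x + lam a y.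
Proof.
have := starD a x y; rewrite !starE => h.
by apply: (addIr (- (x + y))); rewrite h opprD addrACA.
Qed.

Lemma lamN a x : lam a (- x) = - lam a x.
Proof. by apply/eqP; rewrite -subr_eq0 opprK -lamD addNr /lam mul0r subrr. Qed.

Lemma lamB a x y : lam a (x - y) = lam a x - lam a y.
Proof. by rewrite lamD lamN. Qed.

Lemma mul_lam a x : mul a x = a + lam a x.
Proof. by rewrite /lam addrC subrK. Qed.

Lemma lam_mul a b x : lam (mul a b) x = lam a (lam b x).
Proof.
rewrite {1}/lam -mulA (mul_lam b x) mulD addrC addrA addKr.
by rewrite /lam.
Qed.

Lemma lam1 x : lam 0 x = x.
Proof. by rewrite /lam mul0l subr0. Qed.

Lemma star_mul x y a : star (mul x y) a = star x (star y a) + star x a + star y a.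
Proof.
rewrite !starE lam_mul (lamB x (lam y a) a).
rewrite [RHS]addrAC subrK.
by rewrite [RHS]addrA subrK.
Qed.


Lemma lam0 a : lam a 0 = 0.
Proof. by rewrite /lam mul0r subrr. Qed.

Lemma lamV a : lam a (inv a) = - a.
Proof. by rewrite /lam mulVr one0 sub0r. Qed.

Lemma lam_star a w : lam a w = star a w + w.
Proof. by rewrite starE subrK. Qed.

Lemma sg0 (P : T -> Prop) : add_subgroup P -> P 0.
Proof. by case. Qed.
Lemma sgB (P : T -> Prop) x y : add_subgroup P -> P x -> P y -> P (x - y).
Proof. by case=> _ h; apply: h. Qed.
Lemma sgN (P : T -> Prop) x : add_subgroup P -> P x -> P (- x).
Proof. by move=> hP hx; rewrite -sub0r; apply: sgB => //; apply: sg0. Qed.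
Lemma sgD (P : T -> Prop) x y : add_subgroup P -> P x -> P y -> P (x + y).
Proof. by move=> hP hx hy; rewrite -[y]opprK; apply: sgB => //; apply: sgN. Qed.
Lemma sgMn (P : T -> Prop) x n : add_subgroup P -> P x -> P (x *+ n).
Proof.
move=> hP hx; elim: n => [|n IH]; first by rewrite mulr0n; apply: sg0.
by rewrite mulrS; apply: sgD.
Qed.
Lemma sgMz (P : T -> Prop) x k : add_subgroup P -> P x -> P (x *~ k).
Proof.
move=> hP hx; case: k => n; first by apply: sgMn.
by rewrite NegzE mulrNz; apply: sgN => //; apply: sgMn.
Qed.

Lemma gen_sub (S : T -> Prop) : add_subgroup (add_gen S).
Proof.
split; first by move=> H [h0 _] _.
by move=> x y hx hy H hH hS; case: (hH) => _ h; apply: h; [apply: hx | apply: hy].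
Qed.
Lemma gen_in (S : T -> Prop) y : S y -> add_gen S y.
Proof. by move=> hy H _ hS; apply: hS. Qed.

Definition Ann u := forall a, star a u = 0 /\ star u a = 0.

Lemma Ann0 : Ann 0.
Proof. by move=> a; rewrite star0l star0r. Qed.

Lemma star_addAnn p u x : Ann u -> star (p + u) x = star p x.
Proof.
move=> hu.
have -> : p + u = mul p u by rewrite mulE (proj1 (hu p)) addr0.
by rewrite star_mul (proj2 (hu x)) star0r add0r addr0.
Qed.

Lemma AnnD u v : Ann u -> Ann v -> Ann (u + v).
Proof.
move=> hu hv a; rewrite starD (proj1 (hu a)) (proj1 (hv a)) addr0; split => //.
by rewrite star_addAnn //; case: (hu a).
Qed.

Lemma AnnN u : Ann u -> Ann (- u).
Proof.
move=> hu a; rewrite starN (proj1 (hu a)) oppr0; split => //.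
by rewrite -(star_addAnn _ a hu) addNr star0l.
Qed.

Lemma Ann_sub : add_subgroup Ann.
Proof. split; first exact: Ann0. by move=> x y hx hy; apply: AnnD => //; apply: AnnN. Qed.


Lemma ideal_sub I : ideal mul one inv I -> add_subgroup I.
Proof. by case=> [[]]. Qed.

Lemma ideal_starl I a z : ideal mul one inv I -> I z -> I (star a z).
Proof. by case=> _ _ h hz; case: (h a z Logic.I hz). Qed.

Lemma ideal_starr I a z : ideal mul one inv I -> I z -> I (star z a).
Proof. by case=> _ _ h hz; case: (h a z Logic.I hz). Qed.

Lemma ideal_lam I a z : ideal mul one inv I -> I z -> I (lam a z).
Proof.
move=> hI hz; rewrite lam_star; apply: sgD => //; first exact: ideal_sub.
exact: ideal_starl.
Qed.

Lemma conj_eq a z : mul (mul a z) (inv a) = lam a (z + star z (inv a)).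
Proof.
rewrite -mulA (mul_lam a (mul z (inv a))) (mulE z (inv a)).
rewrite (lamD a (z + inv a)) (lamD a z (inv a)) (lamV a) (lamD a z).
by rewrite addrA [a + (_ - a)]addrCA subrr addr0.
Qed.

Lemma conj_in I a z : ideal mul one inv I -> I z -> I (mul (mul a z) (inv a)).
Proof.
move=> hI hz; rewrite conj_eq; apply: ideal_lam => //.
apply: sgD => //; first exact: ideal_sub.
exact: ideal_starr.
Qed.

Lemma lam_star_conj a r b :
  lam a (star r b) = star (mul (mul a r) (inv a)) (lam a b).
Proof.
rewrite !starE lamB lam_mul.
by rewrite -(lam_mul (inv a) a b) mulVl one0 lam1 lam_mul.
Qed.

Lemma full_ideal : ideal mul one inv (@fullset T).
Proof. by split=> //; split. Qed.

Lemma rser_ideal j : ideal mul one inv (rser mul j).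
Proof.
elim: j => [|j IH] /=; first exact: full_ideal.
set R := rser mul j.
set S := (fun z => exists x y, [/\ R x, fullset y & z = star x y]).
have hsub := gen_sub S.
have hlam : forall a x, add_gen S x -> add_gen S (lam a x).
  move=> a x hx; refine (hx (fun x0 => add_gen S (lam a x0)) _ _).
    split; first by rewrite lam0; exact: sg0 hsub.
    by move=> u v hu hv; rewrite lamB; exact: sgB hsub hu hv.
  move=> y [r [b [hr _ ->]]]; rewrite lam_star_conj; apply: gen_in.
  by exists (mul (mul a r) (inv a)), (lam a b); split => //; apply: conj_in.
have hR : forall x, add_gen S x -> R x.
  move=> x hx; apply: hx; first exact: ideal_sub.
  by move=> y [r [b [hr _ ->]]]; apply: ideal_starr.
split => //.
- split => //.
  + by rewrite one0; exact: sg0 hsub.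
  + by move=> x y hx hy; rewrite mul_lam; apply: (sgD hsub) => //; apply: hlam.
  + move=> x hx.
    have -> : inv x = lam (inv x) (- x).
      by rewrite -(lamV x) -lam_mul mulVl one0 lam1.
    by apply: hlam; apply: (sgN hsub).
- move=> a z _ hz; split.
  + by rewrite starE; apply: (sgB hsub) => //; apply: hlam.
  + by apply: gen_in; exists z, a; split => //; apply: hR.
Qed.


Hypothesis HT : T_brace mul one inv.
Hypothesis Htf : torsion_free T.

Lemma tf_int (x : T) (k : int) : k != 0 -> x *~ k = 0 -> x = 0.
Proof.
case: k => n.
  case: n => [//|n] _ /= h; exact: Htf h.
move=> _; rewrite NegzE mulrNz => /eqP; rewrite oppr_eq0 => /eqP h.
exact: Htf h.
Qed.

Lemma lser_iter a z m : star a z = z *~ m -> forall i, lser mul i (z *~ (m ^+ i)).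
Proof.
move=> h; elim => [|i IH] //=.
apply: gen_in; exists a, (z *~ (m ^+ i)); split => //.
by rewrite starMz h -mulrzA exprS.
Qed.

Lemma left_zero K a z m : is_zero_set (lser mul K) -> star a z = z *~ m -> star a z = 0.
Proof.
move=> hK h; have := hK _ (lser_iter h K).
have [hm|nz] := boolP (m ^+ K == 0).
  by move: hm; rewrite expf_eq0 => /andP [_ /eqP hm0] _; rewrite h hm0 mulr0z.
by move=> /(tf_int nz) ->; rewrite star0r.
Qed.


Lemma addBB (x y a b : T) : (x - y) - (a - b) = (x - a) - (y - b).
Proof. by rewrite !opprB addrACA [RHS]addrACA (addrC (- a)). Qed.

Lemma addDDB (x y s a b : T) : (x + y + s) - (a + b) = (x - a) + (y - b) + s.
Proof. by rewrite addrAC opprD addrACA. Qed.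

Lemma inv_eq x : inv x = - star x (inv x) - x.
Proof.
have h := mulE x (inv x); rewrite mulVr one0 in h.
have := congr1 (fun q => q - star x (inv x) - x) h.
by rewrite /= sub0r addrK (addrC x) addrK => ->.
Qed.

Lemma star_lin1 y1 y2 x : Ann (star y1 y2) -> Ann (star y2 x) ->
  star (y1 + y2) x = star y1 x + star y2 x.
Proof.
move=> h1 h2.
have -> : y1 + y2 = mul y1 y2 + - star y1 y2 by rewrite mulE addrK.
rewrite star_addAnn; last exact: AnnN.
by rewrite star_mul (proj1 (h2 y1)) add0r.
Qed.

Definition RA (R : T -> Prop) := forall y b, R y -> Ann (star y b).

Lemma star_linMz R y x c : ideal mul one inv R -> RA R -> R y ->
  star (y *~ c) x = star y x *~ c.
Proof.
move=> hR hRA hy; have hs := ideal_sub hR.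
have hn : forall n, star (y *+ n) x = star y x *+ n.
  elim=> [|n IH]; first by rewrite !mulr0n star0l.
  rewrite !mulrS star_lin1; [by rewrite IH | exact: hRA | apply: hRA; exact: sgMn].
case: c => n; first exact: hn.
rewrite !NegzE !mulrNz; change (star (- (y *+ n.+1)) x = - (star y x *+ n.+1)); rewrite -hn.
have hv : R (y *+ n.+1) by apply: sgMn.
apply/eqP; rewrite -subr_eq0 opprK addrC -star_lin1.
- by rewrite subrr star0l.
- exact: hRA.
- by apply: hRA; apply: sgN.
Qed.

Lemma J2_ideal R w : ideal mul one inv R -> RA R -> R w ->
  ideal mul one inv (fun y => R y /\ exists c, Ann (y - w *~ c)).
Proof.
move=> hR hRA hw; have hs := ideal_sub hR.
apply: (HT hR); split.
- split.
  + split.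
    * split; first exact: sg0.
      by exists 0; rewrite mulr0z subr0; exact: Ann0.
    * move=> x y [hx [c1 h1]] [hy [c2 h2]]; split; first exact: sgB.
      exists (c1 - c2); rewrite mulrzBr addBB.
      by apply: AnnD => //; apply: AnnN.
  + rewrite one0; split; first exact: sg0.
    by exists 0; rewrite mulr0z subr0; exact: Ann0.
  + move=> x y [hx [c1 h1]] [hy [c2 h2]]; split.
      by case: hR => [[_ _ hm _] _ _]; apply: hm.
    exists (c1 + c2); rewrite mulE mulrzDr addDDB.
    by apply: AnnD; [apply: AnnD | apply: hRA].
  + move=> x [hx [c h]]; split.
      by case: hR => [[_ _ _ hi] _ _]; apply: hi.
    exists (- c); rewrite {1}inv_eq mulrNz opprK.
    have -> : - star x (inv x) - x + w *~ c = - (x - w *~ c) + - star x (inv x).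
      by rewrite opprB addrC -[in RHS]addrA [in RHS](addrC (- x)).
    by apply: AnnD; apply: AnnN => //; apply: hRA.
- by move=> x [].
- move=> a y ha [hy _]; split; split.
  + exact: ideal_starl.
  + by exists 0; rewrite mulr0z subr0; apply: hRA.
  + exact: ideal_starr.
  + by exists 0; rewrite mulr0z subr0; apply: hRA.
Qed.


Lemma AnnMz u k : Ann u -> Ann (u *~ k).
Proof. by move=> hu; exact: (sgMz k Ann_sub hu). Qed.

Lemma I_ideal R w : ideal mul one inv R -> RA R -> R w ->
  ideal mul one inv (fun y => exists c e : int, y = w *~ c + star w w *~ e).
Proof.
move=> hR hRA hw; have hs := ideal_sub hR.
pose t := star w w.
have ht : Ann t by exact: hRA.
have hRt : R t by exact: ideal_starl.
have hJ2 := J2_ideal hR hRA hw.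
have hIR : forall c e, R (w *~ c + t *~ e).
  by move=> c e; apply: sgD => //; apply: sgMz.
have sy : forall c e x, star (w *~ c + t *~ e) x = star w x *~ c.
  by move=> c e x; rewrite star_addAnn ?(star_linMz _ _ hR hRA hw) //; apply: AnnMz.
have sw : forall d f, star w (w *~ d + t *~ f) = t *~ d.
  by move=> d f; rewrite starD !starMz (proj1 (ht w)) mul0rz addr0.
apply: (HT hJ2); rewrite -/t; split.
- split.
  + split; first by exists 0, 0; rewrite !mulr0z addr0.
    move=> _ _ [c1 [e1 ->]] [c2 [e2 ->]]; exists (c1 - c2), (e1 - e2).
    by rewrite !mulrzBr opprD addrACA.
  + by rewrite one0; exists 0, 0; rewrite !mulr0z addr0.
  + move=> _ _ [c1 [e1 ->]] [c2 [e2 ->]]; exists (c1 + c2), (e1 + e2 + c2 * c1).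
    rewrite mulE sy sw -mulrzA.
    by rewrite !mulrzDr addrACA [RHS]addrA.
  + move=> _ [c [e ->]].
    pose y := w *~ c + t *~ e.
    have hy : R y by exact: hIR.
    have e1 : star w (inv y) = - (t *~ c).
      rewrite {1}(inv_eq y) starB starN (proj1 (hRA y (inv y) hy w)) oppr0 sub0r.
      by rewrite /y sw.
    exists (- c), (c * c - e).
    rewrite {1}(inv_eq y) /y sy -/y e1 mulNrz opprK -mulrzA.
    by rewrite mulrNz mulrzBr /y opprD addrCA.
- move=> _ [c [e ->]]; split; first exact: hIR.
  by exists c; rewrite addrAC subrr add0r; apply: AnnMz.
- move=> a _ [ha [d hd]] [c [e ->]]; split.
  + have ea : star a (w *~ c + t *~ e) =
        star (w *~ d + (a - w *~ d)) (w *~ c + t *~ e) by rewrite [w *~ d + _]addrC subrK.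
    rewrite ea star_addAnn // (star_linMz _ _ hR hRA hw) sw.
    by exists 0, (c * d); rewrite mulr0z add0r mulrzA.
  + rewrite sy.
    have -> : star w a = t *~ d.
      have -> : a = w *~ d + (a - w *~ d) by rewrite addrC subrK.
      by rewrite starD starMz (proj1 (hd w)) addr0.
    by exists 0, (d * c); rewrite mulr0z add0r mulrzA.
Qed.


Lemma odd_nz (e : int) : 1 - 2 * e != 0.
Proof. by apply/eqP => h; lia. Qed.

Lemma step R K : ideal mul one inv R -> RA R -> is_zero_set (lser mul K) ->
  forall z, R z -> Ann z.
Proof.
move=> hR hRA hK z hz; have hs := ideal_sub hR.
pose t := star z z.
have ht : Ann t by exact: hRA.
have hz2 : R (z *~ 2) by exact: sgMz.
have [c [e h]] : exists c e : int,
    star z (z *~ 2) = z *~ 2 *~ c + star (z *~ 2) (z *~ 2) *~ e.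
  case: (I_ideal hR hRA hz2) => _ _ hI.
  apply: (proj1 (hI z (z *~ 2) Logic.I _)).
  by exists 1, 0; rewrite mulr1z mulr0z addr0.
rewrite (star_linMz _ _ hR hRA hz) !starMz -/t in h.
rewrite -!mulrzA in h.
have tE : t = star z z by [].
clearbody t.
pose q := t - z *~ c - t *~ (2 * e).
have hq2 : q *~ 2 = 0.
  rewrite /q !mulrzBl -!mulrzA (mulrC c) (mulrC (2 * e)).
  by rewrite -addrA -opprD -h subrr.
have hq0 : q = 0 by apply: (tf_int _ hq2).
have hq' : t *~ (1 - 2 * e) = z *~ c.
  rewrite mulrzBr mulr1z; apply/eqP; rewrite -subr_eq0 addrAC.
  by rewrite -/q hq0.
have t0 : t = 0.
  have [c0|cn] := eqVneq c 0.
    by move: hq'; rewrite c0 mulr0z; apply: tf_int; exact: odd_nz.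
  have az : forall a, star a z = 0.
    move=> a; apply: (tf_int cn).
    by rewrite -starMz -hq' starMz (proj1 (ht a)) mul0rz.
  by rewrite tE az.
case: (I_ideal hR hRA hz) => _ _ hI.
have hIz : exists c e : int, z = z *~ c + star z z *~ e.
  by exists 1, 0; rewrite mulr1z mulr0z addr0.
move=> a; case: (hI a z Logic.I hIz) => [[c1 [e1 h1]] [p [e2 h2]]].
rewrite -tE t0 mul0rz addr0 in h1; rewrite -tE t0 mul0rz addr0 in h2.
split; first exact: left_zero hK h1.
have := proj2 (hRA z a hz a).
rewrite {1}h2 (star_linMz _ _ hR hRA hz) h2 -mulrzA.
have [pp|pn] := boolP (p * p == 0).
  by move: pp; rewrite mulf_eq0 orbb => /eqP p0 _; rewrite p0 mulr0z.
by move/(tf_int pn) => z0; rewrite z0 mul0rz.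
Qed.

End Pf.

Theorem corollary2 (T : zmodType) (mul : T -> T -> T) (one : T) (inv : T -> T) :
  is_brace mul one inv ->
  T_brace mul one inv ->
  torsion_free T ->
  smok_nilpotent mul ->
  brace_abelian mul.
Proof.
move=> HB HT Htf [[N hN] [K hK]] a b.
have key : forall i, (i <= N)%N -> forall x, rser mul (N - i) x -> Ann mul x.
  elim => [|i IH] hi x hx.
    by rewrite subn0 in hx; rewrite (hN x hx); exact: Ann0 HB.
  have e : (N - i = (N - i.+1).+1)%N by lia.
  apply: (step HB HT Htf (rser_ideal HB (N - i.+1)) _ hK hx).
  move=> y c hy; apply: IH; first exact: ltnW.
  by rewrite e; apply: gen_in; exists y, c.
have := key N (leqnn N) a; rewrite subnn => /(_ Logic.I) h.
exact: proj2 (h b).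
Qed.
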